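(* Let $G$ be a Ricci-flat graph with maximum degree at most $4$ that contains an edge $(x,y)$ with $d(x)=3$ and $d(y)=4$. Then $(x,y)$ is not contained in any cycle of length $3$.
   Context: All graphs are simple (no loops or multiple edges), undirected, connected and locally finite; $d(x)$ is the degree of $x$ and $d(x,y)$ the graph distance. For a vertex $x$ and $\alpha\in[0,1]$ let $\mu_x^\alpha$ be the probability measure with $\mu_x^\alpha(x)=\alpha$, $\mu_x^\alpha(z)=\frac{1-\alpha}{d(x)}$ for $z\sim x$, and $0$ otherwise. The transportation distance is $W(\mu_1,\mu_2)=\inf_A\sum_{u,v}A(u,v)d(u,v)$ over all couplings $A$ of $\mu_1,\mu_2$. Set $k_\alpha(x,y)=1-W(\mu_x^\alpha,\mu_y^\alpha)/d(x,y)$ and $k(x,y)=\lim_{\alpha\to1}k_\alpha(x,y)/(1-\alpha)$ (Lin–Lu–Yau Ricci curvature). A graph is Ricci-flat if $k(x,y)=0$ for every edge $(x,y)$. An edge is contained in a cycle of length $\ell$ if some cycle subgraph of $G$ with $\ell$ vertices uses that edge. *)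

(* Defs.v *)
From Stdlib Require Import Reals Lra List Classical ClassicalEpsilon.
From Coquelicot Require Import Coquelicot.
Import ListNotations.
Open Scope R_scope.

(* A locally finite simple graph on a vertex type V is given by the list of
   neighbours of each vertex: nbr x lists the neighbours of x. *)
Definition adj {V : Type} (nbr : V -> list V) (x y : V) : Prop := In y (nbr x).

Definition simple_graph {V : Type} (nbr : V -> list V) : Prop :=
  (forall x, NoDup (nbr x)) /\
  (forall x, ~ adj nbr x x) /\
  (forall x y, adj nbr x y -> adj nbr y x).

Definition deg {V : Type} (nbr : V -> list V) (x : V) : nat := length (nbr x).

Inductive walk {V : Type} (nbr : V -> list V) : nat -> V -> V -> Prop :=
| walk0 : forall u, walk nbr 0 u u
| walkS : forall n u w v, adj nbr u w -> walk nbr n w v -> walk nbr (S n) u v.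

Definition connected {V : Type} (nbr : V -> list V) : Prop :=
  forall u v, exists n, walk nbr n u v.

(* graph distance: least length of a walk (finite for connected graphs) *)
Definition gdist {V : Type} (nbr : V -> list V) (u v : V) : R :=
  real (Glb_Rbar (fun r => exists n, walk nbr n u v /\ r = INR n)).

Definition decP (P : Prop) : bool :=
  if excluded_middle_informative P then true else false.

Definition mu {V : Type} (nbr : V -> list V) (alpha : R) (x z : V) : R :=
  (if decP (z = x) then alpha else 0) +
  (if decP (In z (nbr x)) then (1 - alpha) / INR (deg nbr x) else 0).

Definition lsum {T : Type} (l : list T) (f : T -> R) : R :=
  fold_right Rplus 0 (map f l).

(* support list of mu_x^alpha (without duplicates in a simple graph) *)
Definition ball1 {V : Type} (nbr : V -> list V) (x : V) : list V := x :: nbr x.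

(* couplings of mu_x^alpha and mu_y^alpha; any coupling is supported on
   ball1 x * ball1 y, so it is given by its values there *)
Definition coupling {V : Type} (nbr : V -> list V) (alpha : R) (x y : V)
  (A : V -> V -> R) : Prop :=
  (forall u v, 0 <= A u v) /\
  (forall u, In u (ball1 nbr x) -> lsum (ball1 nbr y) (fun v => A u v) = mu nbr alpha x u) /\
  (forall v, In v (ball1 nbr y) -> lsum (ball1 nbr x) (fun u => A u v) = mu nbr alpha y v).

Definition transport_cost {V : Type} (nbr : V -> list V) (x y : V) (A : V -> V -> R) : R :=
  lsum (ball1 nbr x) (fun u => lsum (ball1 nbr y) (fun v => A u v * gdist nbr u v)).

Definition W {V : Type} (nbr : V -> list V) (alpha : R) (x y : V) : R :=
  real (Glb_Rbar (fun c => exists A, coupling nbr alpha x y A /\ c = transport_cost nbr x y A)).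

Definition k_alpha {V : Type} (nbr : V -> list V) (alpha : R) (x y : V) : R :=
  1 - W nbr alpha x y / gdist nbr x y.

(* Lin-Lu-Yau curvature k(x,y) = lim_{alpha -> 1} k_alpha(x,y)/(1-alpha);
   "k(x,y) = c" means this limit exists and equals c. *)
Definition llY_curvature_is {V : Type} (nbr : V -> list V) (x y : V) (c : R) : Prop :=
  filterlim (fun alpha => k_alpha nbr alpha x y / (1 - alpha)) (at_left 1) (locally c).

Definition ricci_flat {V : Type} (nbr : V -> list V) : Prop :=
  forall x y, adj nbr x y -> llY_curvature_is nbr x y 0.

Definition edge_in_cycle3 {V : Type} (nbr : V -> list V) (x y : V) : Prop :=
  exists z, z <> x /\ z <> y /\ adj nbr x z /\ adj nbr y z.

(* Main.v *)
Require Import Defs.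
From Stdlib Require Import Reals List Lra Lia Permutation Classical ClassicalEpsilon.
From Coquelicot Require Import Coquelicot.
Import ListNotations.
Open Scope R_scope.

Lemma decP_cases (P : Prop) : (P /\ decP P = true) \/ (~ P /\ decP P = false).
Proof. unfold decP; destruct (excluded_middle_informative P); auto. Qed.

Lemma decP_ext (P Q : Prop) : (P <-> Q) -> decP P = decP Q.
Proof.
  intro H; destruct (decP_cases P) as [[HP ->]|[HP ->]];
  destruct (decP_cases Q) as [[HQ ->]|[HQ ->]]; tauto.
Qed.

Ltac dec := repeat match goal with |- context [decP ?P] =>
  let H := fresh "Hd" in destruct (decP_cases P) as [[H ->]|[H ->]]; try congruence end.

Lemma lsum_nil {T} (f : T -> R) : lsum [] f = 0. Proof. reflexivity. Qed.
Lemma lsum_cons {T} (a : T) l f : lsum (a :: l) f = f a + lsum l f. Proof. reflexivity. Qed.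

Lemma lsum_plus {T} (l : list T) f g : lsum l (fun a => f a + g a) = lsum l f + lsum l g.
Proof. induction l; unfold lsum in *; simpl; [lra|]. rewrite IHl; ring. Qed.

Lemma lsum_scal {T} (l : list T) f c : lsum l (fun a => c * f a) = c * lsum l f.
Proof. induction l; unfold lsum in *; simpl; [ring|]. rewrite IHl; ring. Qed.

Lemma lsum_scal_r {T} (l : list T) f c : lsum l (fun a => f a * c) = lsum l f * c.
Proof. induction l; unfold lsum in *; simpl; [ring|]. rewrite IHl; ring. Qed.

Lemma lsum_zero {T} (l : list T) : lsum l (fun _ => 0) = 0.
Proof. induction l; unfold lsum in *; simpl; [ring|]. rewrite IHl; ring. Qed.

Lemma lsum_ext_in {T} (l : list T) f g : (forall a, In a l -> f a = g a) -> lsum l f = lsum l g.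
Proof. induction l; intros H; unfold lsum in *; simpl; auto.
  rewrite H by (simpl; auto). rewrite IHl; auto. intros; apply H; simpl; auto. Qed.

Lemma lsum_le {T} (l : list T) f g : (forall a, In a l -> f a <= g a) -> lsum l f <= lsum l g.
Proof. induction l; intros H; unfold lsum in *; simpl; [lra|].
  assert (f a <= g a) by (apply H; simpl; auto).
  assert (fold_right Rplus 0 (map f l) <= fold_right Rplus 0 (map g l)) by (apply IHl; intros; apply H; simpl; auto).
  lra. Qed.

Lemma lsum_nonneg {T} (l : list T) f : (forall a, In a l -> 0 <= f a) -> 0 <= lsum l f.
Proof. intros H. rewrite <- (lsum_zero l). apply lsum_le; auto. Qed.

Lemma lsum_swap {T U} (l1 : list T) (l2 : list U) F :
  lsum l1 (fun a => lsum l2 (fun b => F a b)) = lsum l2 (fun b => lsum l1 (fun a => F a b)).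
Proof. induction l1.
  - simpl. rewrite lsum_zero. reflexivity.
  - rewrite lsum_cons, IHl1. rewrite <- lsum_plus. apply lsum_ext_in. intros; rewrite lsum_cons; ring. Qed.

Lemma lsum_perm {T} (l l' : list T) f : Permutation l l' -> lsum l f = lsum l' f.
Proof. intro H; induction H; unfold lsum in *; simpl; try lra. Qed.

Lemma lsum_same {T} (l L : list T) f : NoDup l -> NoDup L -> (forall u, In u l <-> In u L) -> lsum l f = lsum L f.
Proof. intros; apply lsum_perm, NoDup_Permutation; auto. Qed.

Lemma sum_ind {T} (L : list T) (u : T) c : NoDup L ->
  lsum L (fun s => if decP (u = s) then c else 0) = if decP (In u L) then c else 0.
Proof. induction L as [|b L IHL]; intros HN.
  { unfold lsum; simpl. dec; simpl in *; tauto. }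
  - apply NoDup_cons_iff in HN as [Hb HN']. rewrite lsum_cons, IHL by auto.
    dec; simpl in *; subst; try tauto; try lra; exfalso; destruct Hd1; auto.
Qed.

Lemma sum_ind' {T} (L : list T) (u : T) c : NoDup L ->
  lsum L (fun s => if decP (s = u) then c else 0) = if decP (In u L) then c else 0.
Proof. intros; rewrite <- sum_ind by auto. apply lsum_ext_in; intros.
  rewrite (decP_ext (a = u) (u = a)); [reflexivity| split; auto]. Qed.

Section Gen.
Context {V : Type}.

Definition pterm (e : R * V * V) (u v : V) : R :=
  if decP (u = snd (fst e)) then (if decP (v = snd e) then fst (fst e) else 0) else 0.
Definition plan (l : list (R * V * V)) (u v : V) : R := lsum l (fun e => pterm e u v).

Lemma plan_row (l : list (R*V*V)) (Ly : list V) u : NoDup Ly -> List.Forall (fun e => In (snd e) Ly) l ->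
  lsum Ly (fun v => plan l u v) = lsum l (fun e => if decP (u = snd (fst e)) then fst (fst e) else 0).
Proof.
  intros HN HF. unfold plan. rewrite lsum_swap. apply lsum_ext_in. intros e He.
  rewrite List.Forall_forall in HF. specialize (HF e He). unfold pterm.
  destruct (decP (u = snd (fst e))).
  - rewrite sum_ind' by auto. dec.
  - apply lsum_zero.
Qed.

Lemma plan_col (l : list (R*V*V)) (Lx : list V) v : NoDup Lx -> List.Forall (fun e => In (snd (fst e)) Lx) l ->
  lsum Lx (fun u => plan l u v) = lsum l (fun e => if decP (v = snd e) then fst (fst e) else 0).
Proof.
  intros HN HF. unfold plan. rewrite lsum_swap. apply lsum_ext_in. intros e He.
  rewrite List.Forall_forall in HF. specialize (HF e He). unfold pterm.
  rewrite sum_ind' by auto. dec.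
Qed.

Lemma plan_cost (l : list (R*V*V)) (Lx Ly : list V) (d : V -> V -> R) : NoDup Lx -> NoDup Ly ->
  List.Forall (fun e => In (snd (fst e)) Lx /\ In (snd e) Ly) l ->
  lsum Lx (fun u => lsum Ly (fun v => plan l u v * d u v)) = lsum l (fun e => fst (fst e) * d (snd (fst e)) (snd e)).
Proof.
  intros HNx HNy HF. unfold plan.
  transitivity (lsum Lx (fun u => lsum Ly (fun v => lsum l (fun e => pterm e u v * d u v)))).
  { apply lsum_ext_in; intros; apply lsum_ext_in; intros. rewrite lsum_scal_r; auto. }
  transitivity (lsum Lx (fun u => lsum l (fun e => lsum Ly (fun v => pterm e u v * d u v)))).
  { apply lsum_ext_in; intros; apply lsum_swap. }
  rewrite lsum_swap. apply lsum_ext_in. intros e He.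
  rewrite List.Forall_forall in HF. destruct (HF e He) as [H1 H2].
  transitivity (lsum Lx (fun u => if decP (u = snd (fst e)) then
     lsum Ly (fun v => if decP (v = snd e) then fst (fst e) * d (snd (fst e)) (snd e) else 0) else 0)).
  { apply lsum_ext_in; intros u _. unfold pterm. destruct (decP_cases (u = snd (fst e))) as [[Hu ->]|[Hu ->]].
    - apply lsum_ext_in; intros v _. destruct (decP_cases (v = snd e)) as [[Hv ->]|[Hv ->]].
      + subst; reflexivity.
      + ring.
    - transitivity (lsum Ly (fun _ : V => 0)); [apply lsum_ext_in; intros; ring | apply lsum_zero]. }
  rewrite sum_ind' by auto. dec. rewrite sum_ind' by auto. dec.
Qed.

Lemma plan_nonneg (l : list (R*V*V)) u v : List.Forall (fun e => 0 <= fst (fst e)) l -> 0 <= plan l u v.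
Proof.
  intros HF. apply lsum_nonneg. intros e He. rewrite List.Forall_forall in HF. specialize (HF e He).
  unfold pterm. dec; lra.
Qed.

Lemma glb_le (E : R -> Prop) c0 : (forall c, E c -> 0 <= c) -> E c0 -> real (Glb_Rbar E) <= c0.
Proof.
  intros H0 Hc. destruct (Glb_Rbar_correct E) as [Hlb Hgl].
  assert (A1 := Hlb c0 Hc).
  assert (A2 : Rbar_le (Finite 0) (Glb_Rbar E)). { apply Hgl. intros c Hc'. simpl. apply H0; auto. }
  destruct (Glb_Rbar E); simpl in *; auto; contradiction.
Qed.

Lemma glb_ge (E : R -> Prop) L c0 : (forall c, E c -> L <= c) -> E c0 -> L <= real (Glb_Rbar E).
Proof.
  intros H0 Hc. destruct (Glb_Rbar_correct E) as [Hlb Hgl].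
  assert (A1 := Hlb c0 Hc).
  assert (A2 : Rbar_le (Finite L) (Glb_Rbar E)). { apply Hgl. intros c Hc'. simpl. apply H0; auto. }
  destruct (Glb_Rbar E); simpl in *; auto; contradiction.
Qed.

Lemma glb_nonneg (E : R -> Prop) : (forall c, E c -> 0 <= c) -> 0 <= real (Glb_Rbar E).
Proof.
  intros H0. destruct (Glb_Rbar_correct E) as [Hlb Hgl].
  assert (A2 : Rbar_le (Finite 0) (Glb_Rbar E)). { apply Hgl. intros c Hc'. simpl. apply H0; auto. }
  destruct (Glb_Rbar E); simpl in *; auto; lra.
Qed.

Variable nbr : V -> list V.

Lemma gdist_nonneg u v : 0 <= gdist nbr u v.
Proof. unfold gdist. apply glb_nonneg. intros c [n [_ ->]]. apply pos_INR. Qed.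

Lemma gdist_le_walk u v n : walk nbr n u v -> gdist nbr u v <= INR n.
Proof. intros H. unfold gdist. apply glb_le. intros c [m [_ ->]]. apply pos_INR. exists n; auto. Qed.

Lemma gdist_ge u v k : connected nbr -> (forall n, walk nbr n u v -> (k <= n)%nat) -> INR k <= gdist nbr u v.
Proof. intros Hc H. destruct (Hc u v) as [n0 Hn0]. unfold gdist. apply (glb_ge _ _ (INR n0)).
  - intros c [m [Hm ->]]. apply le_INR. auto.
  - exists n0; auto. Qed.

Lemma walk1 u v : adj nbr u v -> walk nbr 1 u v.
Proof. intros; econstructor; eauto. constructor. Qed.
Lemma walk2 u w v : adj nbr u w -> adj nbr w v -> walk nbr 2 u v.
Proof. intros; econstructor; eauto. apply walk1; auto. Qed.
Lemma walk3 u w w' v : adj nbr u w -> adj nbr w w' -> adj nbr w' v -> walk nbr 3 u v.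
Proof. intros; econstructor; eauto. eapply walk2; eauto. Qed.

Lemma walk_inv0 u v : walk nbr 0 u v -> u = v.
Proof. intros H; inversion H; auto. Qed.
Lemma walk_inv1 u v : walk nbr 1 u v -> adj nbr u v.
Proof. intros H; inversion H; subst. apply walk_inv0 in H2; subst; auto. Qed.
Lemma walk_inv2 u v : walk nbr 2 u v -> exists w, adj nbr u w /\ adj nbr w v.
Proof. intros H; inversion H; subst. apply walk_inv1 in H2. eauto. Qed.

Lemma gdist_edge x y : adj nbr x y -> x <> y -> gdist nbr x y = 1.
Proof.
  intros Ha Hne. apply Rle_antisym.
  - change 1 with (INR 1). apply gdist_le_walk, walk1; auto.
  - unfold gdist. apply (glb_ge _ _ 1). intros c [m [Hm ->]].
    destruct m. { apply walk_inv0 in Hm; contradiction. } rewrite S_INR. assert (0 <= INR m) by apply pos_INR. lra.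
    exists 1%nat; split; auto. apply walk1; auto.
Qed.

Lemma cost_nonneg alpha x y A : coupling nbr alpha x y A -> 0 <= transport_cost nbr x y A.
Proof.
  intros [H0 _]. unfold transport_cost. apply lsum_nonneg; intros; apply lsum_nonneg; intros.
  apply Rmult_le_pos; auto. apply gdist_nonneg.
Qed.

Lemma W_le alpha x y A : coupling nbr alpha x y A -> W nbr alpha x y <= transport_cost nbr x y A.
Proof.
  intros H. unfold W. apply glb_le.
  - intros c [B [HB ->]]. eapply cost_nonneg; eauto.
  - exists A; auto.
Qed.

Lemma W_ge alpha x y A0 L : coupling nbr alpha x y A0 ->
  (forall A, coupling nbr alpha x y A -> L <= transport_cost nbr x y A) -> L <= W nbr alpha x y.
Proof.
  intros H0 H. unfold W. apply (glb_ge _ _ (transport_cost nbr x y A0)).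
  - intros c [B [HB ->]]. auto.
  - exists A0; auto.
Qed.

Lemma not_flat x y c : 0 < c ->
  (forall alpha, 1/2 < alpha < 1 ->
     c <= k_alpha nbr alpha x y / (1 - alpha) \/ k_alpha nbr alpha x y / (1 - alpha) <= - c) ->
  ~ llY_curvature_is nbr x y 0.
Proof.
  intros Hc H Hl. unfold llY_curvature_is in Hl.
  rewrite filterlim_locally in Hl. specialize (Hl (mkposreal c Hc)).
  assert (Hh : at_left 1 (fun a => 1/2 < a)).
  { exists (mkposreal (1/2) ltac:(lra)). intros a Ha Ha1. simpl in Ha.
    unfold ball in Ha; simpl in Ha; unfold AbsRing_ball, abs, minus, plus, opp in Ha; simpl in Ha.
    apply Rabs_def2 in Ha. lra. }
  assert (Hl1 : at_left 1 (fun a => a < 1)).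
  { exists (mkposreal 1 Rlt_0_1); intros a _ Ha; exact Ha. }
  destruct (@filter_ex _ _ (at_left_proper_filter 1) _ (filter_and _ _ (filter_and _ _ Hl Hh) Hl1)) as [a [[Hb Ha] Ha1]].
  simpl in Hb. unfold ball in Hb; simpl in Hb; unfold AbsRing_ball, abs, minus, plus, opp in Hb; simpl in Hb.
  apply Rabs_def2 in Hb. destruct (H a) as [H1|H1]; lra.
Qed.

End Gen.

Section Str.
Context {V : Type}.
Lemma nd2 (a b : V) : NoDup [a;b] -> a <> b.
Proof. intros H; inversion H; subst; simpl in *; intuition. Qed.
Lemma nd3 (a b c : V) : NoDup [a;b;c] -> a <> b /\ a <> c /\ b <> c.
Proof. intros H; inversion H; subst; inversion H3; subst; simpl in *; intuition. Qed.
Lemma nd4 (a b c d : V) : NoDup [a;b;c;d] -> a <> b /\ a <> c /\ a <> d /\ b <> c /\ b <> d /\ c <> d.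
Proof. intros H; inversion H; subst; inversion H3; subst; inversion H5; subst; simpl in *; intuition. Qed.

Variable nbr : V -> list V.

Lemma mu_expand alpha X (L : list V) n : (forall u, In u (nbr X) <-> In u L) -> NoDup L -> NoDup (nbr X) ->
  INR (length L) = n ->
  forall u, mu nbr alpha X u = (if decP (u = X) then alpha else 0) +
     lsum L (fun s => if decP (u = s) then (1 - alpha) / n else 0).
Proof.
  intros HX HL HN Hn u. unfold mu. rewrite sum_ind by auto.
  rewrite (decP_ext (In u (nbr X)) (In u L)) by auto.
  unfold deg. rewrite (Permutation_length (NoDup_Permutation HN HL HX)), Hn. reflexivity.
Qed.

Lemma notself X (L : list V) v : simple_graph nbr -> (forall u, In u (nbr X) <-> In u L) -> In v L -> X <> v.
Proof. intros [_ [Hi _]] HX Hv ->. apply (Hi v). unfold adj. apply HX; auto. Qed.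

Lemma adj_of X (L : list V) v : (forall u, In u (nbr X) <-> In u L) -> In v L -> adj nbr X v.
Proof. intros HX Hv. unfold adj. apply HX; auto. Qed.

Lemma adj_sym' X v : simple_graph nbr -> adj nbr X v -> adj nbr v X.
Proof. intros [_ [_ Hs]]; auto. Qed.

Lemma ball_nodup X : simple_graph nbr -> NoDup (ball1 nbr X).
Proof. intros [Hn [Hi _]]. unfold ball1. constructor; auto. apply Hi. Qed.

Lemma in_ball X (L : list V) v : (forall u, In u (nbr X) <-> In u L) -> (v = X \/ In v L) -> In v (ball1 nbr X).
Proof. intros HX [->|H]; simpl; auto. right; apply HX; auto. Qed.

Lemma coupling_plan alpha X Y (l : list (R*V*V)) : simple_graph nbr ->
  List.Forall (fun e => 0 <= fst (fst e)) l ->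
  List.Forall (fun e => In (snd (fst e)) (ball1 nbr X) /\ In (snd e) (ball1 nbr Y)) l ->
  (forall u, In u (ball1 nbr X) -> lsum l (fun e => if decP (u = snd (fst e)) then fst (fst e) else 0) = mu nbr alpha X u) ->
  (forall v, In v (ball1 nbr Y) -> lsum l (fun e => if decP (v = snd e) then fst (fst e) else 0) = mu nbr alpha Y v) ->
  coupling nbr alpha X Y (plan l) /\
  transport_cost nbr X Y (plan l) = lsum l (fun e => fst (fst e) * gdist nbr (snd (fst e)) (snd e)).
Proof.
  intros Hs H0 HF Hr Hc. assert (HNX := ball_nodup X Hs). assert (HNY := ball_nodup Y Hs).
  split; [split; [|split]|].
  - intros; apply plan_nonneg; auto.
  - intros u Hu. rewrite plan_row; auto. eapply List.Forall_impl; [|exact HF]. simpl; tauto.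
  - intros v Hv. rewrite plan_col; auto. eapply List.Forall_impl; [|exact HF]. simpl; tauto.
  - unfold transport_cost. apply plan_cost; auto.
Qed.

Lemma pos_from_plans X Y c : simple_graph nbr -> adj nbr X Y -> 0 < c ->
  (forall alpha, 1/2 < alpha < 1 -> exists A, coupling nbr alpha X Y A /\
       transport_cost nbr X Y A <= 1 - c * (1 - alpha)) ->
  ~ llY_curvature_is nbr X Y 0.
Proof.
  intros Hs Ha Hc H. apply (not_flat nbr X Y c Hc). intros alpha Hal. left.
  destruct (H alpha Hal) as [A [HA HcA]].
  assert (HW := W_le nbr alpha X Y A HA).
  unfold k_alpha. rewrite gdist_edge; auto.
  2:{ intros ->. destruct Hs as [_ [Hi _]]. apply (Hi Y Ha). }
  apply Rmult_le_reg_r with (1 - alpha). lra.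
  unfold Rdiv. rewrite Rmult_assoc, Rinv_l by lra. lra.
Qed.

Lemma neg_from_bound X Y c : simple_graph nbr -> adj nbr X Y -> 0 < c ->
  (forall alpha, 1/2 < alpha < 1 -> (exists A0, coupling nbr alpha X Y A0) /\
     forall A, coupling nbr alpha X Y A -> 1 + c * (1 - alpha) <= transport_cost nbr X Y A) ->
  ~ llY_curvature_is nbr X Y 0.
Proof.
  intros Hs Ha Hc H. apply (not_flat nbr X Y c Hc). intros alpha Hal. right.
  destruct (H alpha Hal) as [[A0 HA0] HcA].
  assert (HW := W_ge nbr alpha X Y A0 _ HA0 HcA).
  unfold k_alpha. rewrite gdist_edge; auto.
  2:{ intros ->. destruct Hs as [_ [Hi _]]. apply (Hi Y Ha). }
  apply Rmult_le_reg_r with (1 - alpha). lra.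
  unfold Rdiv. rewrite Rmult_assoc, Rinv_l by lra. lra.
Qed.

End Str.

 Lemma mb (m d k : R) : 0 <= m -> d <= k -> m * d <= m * k.
 Proof. intros; apply Rmult_le_compat_l; auto. Qed.
 
 Ltac ball_tac L := repeat constructor; (apply in_ball with (L := L); [assumption|]); simpl; tauto.
 
 Lemma U4 {V} (nbr : V -> list V) X Y Z A W W' : simple_graph nbr ->
   (forall u, In u (nbr X) <-> In u [Y;Z;A]) -> NoDup [Y;Z;A] ->
   (forall u, In u (nbr Y) <-> In u [X;Z;W;W']) -> NoDup [X;Z;W;W'] ->
   (exists n, (n <= 2)%nat /\ walk nbr n A W) ->
   ~ llY_curvature_is nbr X Y 0.
 Proof.
   intros Hs HX HNX HY HNY [n [Hn HAW]].
   destruct (nd3 _ _ _ HNX) as [n1 [n2 n3]].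
   destruct (nd4 _ _ _ _ HNY) as [m1 [m2 [m3 [m4 [m5 m6]]]]].
   assert (xy : X <> Y) by (apply (notself nbr X [Y;Z;A]); simpl; auto).
   assert (xz : X <> Z) by (apply (notself nbr X [Y;Z;A]); simpl; auto).
   assert (xa : X <> A) by (apply (notself nbr X [Y;Z;A]); simpl; auto).
   assert (yw : Y <> W) by (apply (notself nbr Y [X;Z;W;W']); simpl; auto).
   assert (yw' : Y <> W') by (apply (notself nbr Y [X;Z;W;W']); simpl; auto).
   assert (aXY : adj nbr X Y) by (apply (adj_of nbr X [Y;Z;A]); simpl; auto).
   assert (aXA : adj nbr X A) by (apply (adj_of nbr X [Y;Z;A]); simpl; auto).
   assert (aYZ : adj nbr Y Z) by (apply (adj_of nbr Y [X;Z;W;W']); simpl; auto).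
   assert (aYW' : adj nbr Y W') by (apply (adj_of nbr Y [X;Z;W;W']); simpl; auto).
   apply (pos_from_plans nbr X Y (1/4)); auto; [lra|].
   intros al Hal.
   set (b := 1 - al).
   set (l := [(b/4,X,X); (al - 5*b/12, X, Y); (b/6, X, W'); (b/3, Y, Y); (b/4, Z, Z); (b/12, Z, Y); (b/4, A, W); (b/12, A, W')]).
   destruct (coupling_plan nbr al X Y l Hs) as [Hcp Hcost].
   - unfold l; repeat apply List.Forall_cons; try apply List.Forall_nil; simpl; unfold b; lra.
   - assert (bX : forall v, v = X \/ In v [Y;Z;A] -> In v (ball1 nbr X)) by (intros; apply in_ball with (L := [Y;Z;A]); auto).
     assert (bY : forall v, v = Y \/ In v [X;Z;W;W'] -> In v (ball1 nbr Y)) by (intros; apply in_ball with (L := [X;Z;W;W']); auto).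
     unfold l; repeat apply List.Forall_cons; try apply List.Forall_nil; (split; [apply bX|apply bY]; simpl; tauto).
   - intros u Hu. rewrite (mu_expand nbr al X [Y;Z;A] 3) by first [assumption | apply (proj1 Hs) | (simpl; lra)].
     simpl in Hu. destruct Hu as [<-|Hu]; [|apply HX in Hu; simpl in Hu; destruct Hu as [<-|[<-|[<-|[]]]]];
     unfold l, lsum; simpl; dec; unfold b; lra.
   - intros u Hu. rewrite (mu_expand nbr al Y [X;Z;W;W'] 4) by first [assumption | apply (proj1 Hs) | (simpl; lra)].
     simpl in Hu. destruct Hu as [<-|Hu]; [|apply HY in Hu; simpl in Hu; destruct Hu as [<-|[<-|[<-|[<-|[]]]]]];
     unfold l, lsum; simpl; dec; unfold b; lra.
   - exists (plan l); split; auto. rewrite Hcost. unfold l, lsum; simpl.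
     assert (d0 : forall s, gdist nbr s s <= 0) by (intros s; change 0 with (INR 0); apply gdist_le_walk; constructor).
     assert (dXY : gdist nbr X Y <= 1) by (change 1 with (INR 1); apply gdist_le_walk, walk1; auto).
     assert (dXW' : gdist nbr X W' <= 2) by (apply Rle_trans with (INR 2); [apply gdist_le_walk; apply walk2 with (w := Y); auto | simpl; lra]).
     assert (dZY : gdist nbr Z Y <= 1) by (change 1 with (INR 1); apply gdist_le_walk, walk1; apply adj_sym'; auto).
     assert (dAW : gdist nbr A W <= 2).
     { apply Rle_trans with (INR n). apply gdist_le_walk; auto. apply Rle_trans with (INR 2); [apply le_INR; auto | simpl; lra]. }
     assert (dAW' : gdist nbr A W' <= 3).
     { apply Rle_trans with (INR 3); [apply gdist_le_walk; apply walk3 with (w := X) (w' := Y); auto; apply adj_sym'; auto | simpl; lra]. }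
     assert (Hb : 0 < b) by (unfold b; lra).
     pose proof (mb (b/4) _ _ ltac:(lra) (d0 X)).
     pose proof (mb (al - 5*b/12) _ _ ltac:(unfold b; lra) dXY).
     pose proof (mb (b/6) _ _ ltac:(lra) dXW').
     pose proof (mb (b/3) _ _ ltac:(lra) (d0 Y)).
     pose proof (mb (b/4) _ _ ltac:(lra) (d0 Z)).
     pose proof (mb (b/12) _ _ ltac:(lra) dZY).
     pose proof (mb (b/4) _ _ ltac:(lra) dAW).
     pose proof (mb (b/12) _ _ ltac:(lra) dAW').
     unfold b in *. lra.
 Qed.

Lemma U3 {V} (nbr : V -> list V) X Y Z A W : simple_graph nbr ->
  (forall u, In u (nbr X) <-> In u [Y;Z;A]) -> NoDup [Y;Z;A] ->
  (forall u, In u (nbr Y) <-> In u [X;Z;W]) -> NoDup [X;Z;W] ->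
  ~ llY_curvature_is nbr X Y 0.
Proof.
  intros Hs HX HNX HY HNY.
  destruct (nd3 _ _ _ HNX) as [n1 [n2 n3]].
  destruct (nd3 _ _ _ HNY) as [m1 [m2 m3]].
  assert (xy : X <> Y) by (apply (notself nbr X [Y;Z;A]); simpl; auto).
  assert (xz : X <> Z) by (apply (notself nbr X [Y;Z;A]); simpl; auto).
  assert (xa : X <> A) by (apply (notself nbr X [Y;Z;A]); simpl; auto).
  assert (yw : Y <> W) by (apply (notself nbr Y [X;Z;W]); simpl; auto).
  assert (aXY : adj nbr X Y) by (apply (adj_of nbr X [Y;Z;A]); simpl; auto).
  assert (aXA : adj nbr X A) by (apply (adj_of nbr X [Y;Z;A]); simpl; auto).
  assert (aYW : adj nbr Y W) by (apply (adj_of nbr Y [X;Z;W]); simpl; auto).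
  apply (pos_from_plans nbr X Y (1/3)); auto; [lra|].
  intros al Hal.
  set (b := 1 - al).
  set (l := [(b/3,X,X); (al - b/3, X, Y); (b/3, Y, Y); (b/3, Z, Z); (b/3, A, W)]).
  destruct (coupling_plan nbr al X Y l Hs) as [Hcp Hcost].
  - unfold l; repeat apply List.Forall_cons; try apply List.Forall_nil; simpl; unfold b; lra.
  - assert (bX : forall v, v = X \/ In v [Y;Z;A] -> In v (ball1 nbr X)) by (intros; apply in_ball with (L := [Y;Z;A]); auto).
    assert (bY : forall v, v = Y \/ In v [X;Z;W] -> In v (ball1 nbr Y)) by (intros; apply in_ball with (L := [X;Z;W]); auto).
    unfold l; repeat apply List.Forall_cons; try apply List.Forall_nil; (split; [apply bX|apply bY]; simpl; tauto).
  - intros u Hu. rewrite (mu_expand nbr al X [Y;Z;A] 3) by first [assumption | apply (proj1 Hs) | (simpl; lra)].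
    simpl in Hu. destruct Hu as [<-|Hu]; [|apply HX in Hu; simpl in Hu; destruct Hu as [<-|[<-|[<-|[]]]]];
    unfold l, lsum; simpl; dec; unfold b; lra.
  - intros u Hu. rewrite (mu_expand nbr al Y [X;Z;W] 3) by first [assumption | apply (proj1 Hs) | (simpl; lra)].
    simpl in Hu. destruct Hu as [<-|Hu]; [|apply HY in Hu; simpl in Hu; destruct Hu as [<-|[<-|[<-|[]]]]];
    unfold l, lsum; simpl; dec; unfold b; lra.
  - exists (plan l); split; auto. rewrite Hcost. unfold l, lsum; simpl.
    assert (d0 : forall s, gdist nbr s s <= 0) by (intros s; change 0 with (INR 0); apply gdist_le_walk; constructor).
    assert (dXY : gdist nbr X Y <= 1) by (change 1 with (INR 1); apply gdist_le_walk, walk1; auto).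
    assert (dAW : gdist nbr A W <= 3).
    { apply Rle_trans with (INR 3); [apply gdist_le_walk; apply walk3 with (w := X) (w' := Y); auto; apply adj_sym'; auto | simpl; lra]. }
    assert (Hb : 0 < b) by (unfold b; lra).
    pose proof (mb (b/3) _ _ ltac:(lra) (d0 X)).
    pose proof (mb (al - b/3) _ _ ltac:(unfold b; lra) dXY).
    pose proof (mb (b/3) _ _ ltac:(lra) (d0 Y)).
    pose proof (mb (b/3) _ _ ltac:(lra) (d0 Z)).
    pose proof (mb (b/3) _ _ ltac:(lra) dAW).
    unfold b in *. lra.
Qed.

Lemma U2 {V} (nbr : V -> list V) X Y Z A : simple_graph nbr ->
  (forall u, In u (nbr X) <-> In u [Y;Z;A]) -> NoDup [Y;Z;A] ->
  (forall u, In u (nbr Y) <-> In u [X;Z]) -> NoDup [X;Z] ->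
  ~ llY_curvature_is nbr X Y 0.
Proof.
  intros Hs HX HNX HY HNY.
  destruct (nd3 _ _ _ HNX) as [n1 [n2 n3]].
  assert (m1 := nd2 _ _ HNY).
  assert (xy : X <> Y) by (apply (notself nbr X [Y;Z;A]); simpl; auto).
  assert (xz : X <> Z) by (apply (notself nbr X [Y;Z;A]); simpl; auto).
  assert (xa : X <> A) by (apply (notself nbr X [Y;Z;A]); simpl; auto).
  assert (aXY : adj nbr X Y) by (apply (adj_of nbr X [Y;Z;A]); simpl; auto).
  assert (aXZ : adj nbr X Z) by (apply (adj_of nbr X [Y;Z;A]); simpl; auto).
  assert (aXA : adj nbr X A) by (apply (adj_of nbr X [Y;Z;A]); simpl; auto).
  apply (pos_from_plans nbr X Y (1/2)); auto; [lra|].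
  intros al Hal.
  set (b := 1 - al).
  set (l := [(b/2,X,X); (al - b/2, X, Y); (b/3, Y, Y); (b/3, Z, Z); (b/6, A, Y); (b/6, A, Z)]).
  destruct (coupling_plan nbr al X Y l Hs) as [Hcp Hcost].
  - unfold l; repeat apply List.Forall_cons; try apply List.Forall_nil; simpl; unfold b; lra.
  - assert (bX : forall v, v = X \/ In v [Y;Z;A] -> In v (ball1 nbr X)) by (intros; apply in_ball with (L := [Y;Z;A]); auto).
    assert (bY : forall v, v = Y \/ In v [X;Z] -> In v (ball1 nbr Y)) by (intros; apply in_ball with (L := [X;Z]); auto).
    unfold l; repeat apply List.Forall_cons; try apply List.Forall_nil; (split; [apply bX|apply bY]; simpl; tauto).
  - intros u Hu. rewrite (mu_expand nbr al X [Y;Z;A] 3) by first [assumption | apply (proj1 Hs) | (simpl; lra)].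
    simpl in Hu. destruct Hu as [<-|Hu]; [|apply HX in Hu; simpl in Hu; destruct Hu as [<-|[<-|[<-|[]]]]];
    unfold l, lsum; simpl; dec; unfold b; lra.
  - intros u Hu. rewrite (mu_expand nbr al Y [X;Z] 2) by first [assumption | apply (proj1 Hs) | (simpl; lra)].
    simpl in Hu. destruct Hu as [<-|Hu]; [|apply HY in Hu; simpl in Hu; destruct Hu as [<-|[<-|[]]]];
    unfold l, lsum; simpl; dec; unfold b; lra.
  - exists (plan l); split; auto. rewrite Hcost. unfold l, lsum; simpl.
    assert (d0 : forall s, gdist nbr s s <= 0) by (intros s; change 0 with (INR 0); apply gdist_le_walk; constructor).
    assert (dXY : gdist nbr X Y <= 1) by (change 1 with (INR 1); apply gdist_le_walk, walk1; auto).
    assert (dAY : gdist nbr A Y <= 2).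
    { apply Rle_trans with (INR 2); [apply gdist_le_walk; apply walk2 with (w := X); auto; apply adj_sym'; auto | simpl; lra]. }
    assert (dAZ : gdist nbr A Z <= 2).
    { apply Rle_trans with (INR 2); [apply gdist_le_walk; apply walk2 with (w := X); auto; apply adj_sym'; auto | simpl; lra]. }
    assert (Hb : 0 < b) by (unfold b; lra).
    pose proof (mb (b/2) _ _ ltac:(lra) (d0 X)).
    pose proof (mb (al - b/2) _ _ ltac:(unfold b; lra) dXY).
    pose proof (mb (b/3) _ _ ltac:(lra) (d0 Y)).
    pose proof (mb (b/3) _ _ ltac:(lra) (d0 Z)).
    pose proof (mb (b/6) _ _ ltac:(lra) dAY).
    pose proof (mb (b/6) _ _ ltac:(lra) dAZ).
    unfold b in *. lra.
Qed.

Lemma U1 {V} (nbr : V -> list V) X Y Z A : simple_graph nbr ->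
  (forall u, In u (nbr X) <-> In u [Y;Z;A]) -> NoDup [Y;Z;A] ->
  (forall u, In u (nbr A) <-> In u [X]) ->
  ~ llY_curvature_is nbr X A 0.
Proof.
  intros Hs HX HNX HA.
  assert (HNA : NoDup [X]) by (constructor; [simpl; tauto | constructor]).
  destruct (nd3 _ _ _ HNX) as [n1 [n2 n3]].
  assert (xy : X <> Y) by (apply (notself nbr X [Y;Z;A]); simpl; auto).
  assert (xz : X <> Z) by (apply (notself nbr X [Y;Z;A]); simpl; auto).
  assert (xa : X <> A) by (apply (notself nbr X [Y;Z;A]); simpl; auto).
  assert (aXY : adj nbr X Y) by (apply (adj_of nbr X [Y;Z;A]); simpl; auto).
  assert (aXZ : adj nbr X Z) by (apply (adj_of nbr X [Y;Z;A]); simpl; auto).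
  assert (aXA : adj nbr X A) by (apply (adj_of nbr X [Y;Z;A]); simpl; auto).
  apply (pos_from_plans nbr X A (1/2)); auto; [lra|].
  intros al Hal.
  set (b := 1 - al).
  set (l := [(b,X,X); (al - b, X, A); (b/3, A, A); (b/3, Y, A); (b/3, Z, A)]).
  destruct (coupling_plan nbr al X A l Hs) as [Hcp Hcost].
  - unfold l; repeat apply List.Forall_cons; try apply List.Forall_nil; simpl; unfold b; lra.
  - assert (bX : forall v, v = X \/ In v [Y;Z;A] -> In v (ball1 nbr X)) by (intros; apply in_ball with (L := [Y;Z;A]); auto).
    assert (bY : forall v, v = A \/ In v [X] -> In v (ball1 nbr A)) by (intros; apply in_ball with (L := [X]); auto).
    unfold l; repeat apply List.Forall_cons; try apply List.Forall_nil; (split; [apply bX|apply bY]; simpl; tauto).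
  - intros u Hu. rewrite (mu_expand nbr al X [Y;Z;A] 3) by first [assumption | apply (proj1 Hs) | (simpl; lra)].
    simpl in Hu. destruct Hu as [<-|Hu]; [|apply HX in Hu; simpl in Hu; destruct Hu as [<-|[<-|[<-|[]]]]];
    unfold l, lsum; simpl; dec; unfold b; lra.
  - intros u Hu. rewrite (mu_expand nbr al A [X] 1) by first [assumption | apply (proj1 Hs) | (simpl; lra)].
    simpl in Hu. destruct Hu as [<-|Hu]; [|apply HA in Hu; simpl in Hu; destruct Hu as [<-|[]]];
    unfold l, lsum; simpl; dec; unfold b; lra.
  - exists (plan l); split; auto. rewrite Hcost. unfold l, lsum; simpl.
    assert (d0 : forall s, gdist nbr s s <= 0) by (intros s; change 0 with (INR 0); apply gdist_le_walk; constructor).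
    assert (dXA : gdist nbr X A <= 1) by (change 1 with (INR 1); apply gdist_le_walk, walk1; auto).
    assert (dYA : gdist nbr Y A <= 2).
    { apply Rle_trans with (INR 2); [apply gdist_le_walk; apply walk2 with (w := X); auto; apply adj_sym'; auto | simpl; lra]. }
    assert (dZA : gdist nbr Z A <= 2).
    { apply Rle_trans with (INR 2); [apply gdist_le_walk; apply walk2 with (w := X); auto; apply adj_sym'; auto | simpl; lra]. }
    assert (Hb : 0 < b) by (unfold b; lra).
    pose proof (mb b _ _ ltac:(lra) (d0 X)).
    pose proof (mb (al - b) _ _ ltac:(unfold b; lra) dXA).
    pose proof (mb (b/3) _ _ ltac:(lra) (d0 A)).
    pose proof (mb (b/3) _ _ ltac:(lra) dYA).
    pose proof (mb (b/3) _ _ ltac:(lra) dZA).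
    unfold b in *. lra.
Qed.

Lemma mu_total {V} (nbr : V -> list V) al v : simple_graph nbr -> (1 <= deg nbr v)%nat ->
  lsum (ball1 nbr v) (mu nbr al v) = 1.
Proof.
  intros [Hn [Hi _]] Hd. unfold ball1. rewrite lsum_cons.
  assert (Hnot : ~ In v (nbr v)) by apply Hi.
  assert (Hm : mu nbr al v v = al) by (unfold mu; dec; try contradiction; lra).
  rewrite Hm.
  rewrite (lsum_ext_in _ _ (fun _ => (1 - al) / INR (deg nbr v))).
  2:{ intros a Ha. unfold mu. dec; try contradiction; try (subst; contradiction); ring. }
  assert (forall (l : list V) c, lsum l (fun _ => c) = INR (length l) * c).
  { induction l; intros c; unfold lsum in *; simpl; [ring|]. rewrite IHl. destruct (length l); simpl; ring. }
  rewrite H. unfold deg in *. field_simplify. lra.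
  apply not_0_INR. lia.
Qed.

Lemma lsum_minus {T} (l : list T) g h : lsum l (fun a => g a - h a) = lsum l g - lsum l h.
Proof. induction l; unfold lsum in *; simpl; [ring|]. rewrite IHl; ring. Qed.

Lemma dual_bound {V} (nbr : V -> list V) al X Y A (f : V -> R) :
  coupling nbr al X Y A ->
  (forall u v, In u (ball1 nbr X) -> In v (ball1 nbr Y) -> f u - f v <= gdist nbr u v) ->
  lsum (ball1 nbr X) (fun u => f u * mu nbr al X u) - lsum (ball1 nbr Y) (fun v => f v * mu nbr al Y v)
    <= transport_cost nbr X Y A.
Proof.
  intros [H0 [Hr Hc]] Hf. unfold transport_cost.
  apply Rle_trans with (lsum (ball1 nbr X) (fun u => lsum (ball1 nbr Y) (fun v => A u v * (f u - f v)))).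
  2:{ apply lsum_le; intros u Hu; apply lsum_le; intros v Hv. apply Rmult_le_compat_l; auto. }
  assert (E : lsum (ball1 nbr X) (fun u => lsum (ball1 nbr Y) (fun v => A u v * (f u - f v))) =
     lsum (ball1 nbr X) (fun u => f u * lsum (ball1 nbr Y) (fun v => A u v)) -
     lsum (ball1 nbr Y) (fun v => f v * lsum (ball1 nbr X) (fun u => A u v))).
  { transitivity (lsum (ball1 nbr X) (fun u => lsum (ball1 nbr Y) (fun v => f u * A u v) - lsum (ball1 nbr Y) (fun v => f v * A u v))).
    { apply lsum_ext_in; intros u _. rewrite <- lsum_minus. apply lsum_ext_in; intros; ring. }
    rewrite lsum_minus. f_equal.
    - apply lsum_ext_in; intros. apply lsum_scal.
    - rewrite lsum_swap. apply lsum_ext_in; intros. apply lsum_scal. }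
  rewrite E. apply Req_le. f_equal.
  - apply lsum_ext_in; intros u Hu. rewrite Hr; auto.
  - apply lsum_ext_in; intros v Hv. rewrite Hc; auto.
Qed.

Lemma ge1 {V} (nbr : V -> list V) u v : connected nbr -> u <> v -> 1 <= gdist nbr u v.
Proof. intros Hc Hne. change 1 with (INR 1). apply gdist_ge; auto. intros n Hn.
  destruct n; [apply walk_inv0 in Hn; contradiction| lia]. Qed.
Lemma ge2 {V} (nbr : V -> list V) u v : connected nbr -> u <> v -> ~ adj nbr u v -> 2 <= gdist nbr u v.
Proof. intros Hc Hne Ha. replace 2 with (INR 2) by (simpl; lra). apply gdist_ge; auto. intros n Hn.
  destruct n as [|[|n]]; [apply walk_inv0 in Hn; contradiction| apply walk_inv1 in Hn; contradiction | lia]. Qed.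
Lemma ge3 {V} (nbr : V -> list V) u v : connected nbr -> u <> v -> ~ adj nbr u v ->
  (forall q, adj nbr u q -> adj nbr q v -> False) -> 3 <= gdist nbr u v.
Proof. intros Hc Hne Ha Hq. replace 3 with (INR 3) by (simpl; lra). apply gdist_ge; auto. intros n Hn.
  destruct n as [|[|[|n]]]; [apply walk_inv0 in Hn; contradiction| apply walk_inv1 in Hn; contradiction
  | apply walk_inv2 in Hn; destruct Hn as [q [H1 H2]]; exfalso; eauto | lia]. Qed.

Lemma mu_nonneg {V} (nbr : V -> list V) al X u : 0 <= al <= 1 -> 0 <= mu nbr al X u.
Proof. intros H. unfold mu. assert (0 <= INR (deg nbr X)) by apply pos_INR.
  dec; try lra. destruct (Req_dec (INR (deg nbr X)) 0) as [E|E].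
  - rewrite E. unfold Rdiv. rewrite Rinv_0. lra.
  - apply Rplus_le_le_0_compat; [lra|]. apply Rdiv_le_0_compat; lra.
  - apply Rplus_le_le_0_compat; [lra|]. destruct (Req_dec (INR (deg nbr X)) 0) as [E|E].
    + rewrite E. unfold Rdiv. rewrite Rinv_0. lra.
    + apply Rdiv_le_0_compat; lra.
Qed.

Lemma Lneg {V} (nbr : V -> list V) X Y Z A B C W1 W2 (P : list V) : simple_graph nbr -> connected nbr ->
  (forall u, In u (nbr X) <-> In u [Y;Z;A]) -> NoDup [Y;Z;A] ->
  (forall u, In u (nbr Y) <-> In u [X;Z;B;C]) ->
  (forall u, In u (nbr Z) <-> In u [X;Y;W1;W2]) ->
  (forall u, In u (nbr A) <-> In u (X :: P)) -> NoDup (X :: P) -> P <> [] ->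
  (forall u n, In u [B;C;W1;W2] -> (n <= 2)%nat -> ~ walk nbr n A u) ->
  ~ adj nbr A Y -> ~ adj nbr A Z ->
  ~ llY_curvature_is nbr X A 0.
Proof.
  intros Hs Hc HX HNX HY HZ HA HNA HP Hfar HAY HAZ.
  destruct (nd3 _ _ _ HNX) as [n1 [n2 n3]].
  assert (xy : X <> Y) by (apply (notself nbr X [Y;Z;A]); simpl; auto).
  assert (xz : X <> Z) by (apply (notself nbr X [Y;Z;A]); simpl; auto).
  assert (xa : X <> A) by (apply (notself nbr X [Y;Z;A]); simpl; auto).
  assert (aXA : adj nbr X A) by (apply (adj_of nbr X [Y;Z;A]); simpl; auto).
  assert (Hsym : forall u v, adj nbr u v -> adj nbr v u) by (intros; apply adj_sym'; auto).
  assert (HnA : ~ In A (X :: P)) by (intro H; apply HA in H; apply (proj1 (proj2 Hs) A); exact H).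
  assert (Hp : forall p, In p P -> adj nbr A p /\ p <> X /\ p <> A /\ p <> Y /\ p <> Z).
  { intros p Hp. assert (Ap : adj nbr A p) by (unfold adj; apply HA; simpl; auto).
    inversion HNA; subst. repeat split; auto.
    - intros ->; contradiction.
    - intros ->; apply HnA; simpl; auto.
    - intros ->; contradiction.
    - intros ->; contradiction. }
  assert (far : forall u n, In u [B;C;W1;W2] -> (n <= 2)%nat -> walk nbr n A u -> False)
    by (intros u n H1 H2 H3; exact (Hfar u n H1 H2 H3)).
  assert (dXA : 1 <= gdist nbr X A) by (apply ge1; auto).
  assert (dYX : 1 <= gdist nbr Y X) by (apply ge1; auto).
  assert (dZX : 1 <= gdist nbr Z X) by (apply ge1; auto).
  assert (dYA : 2 <= gdist nbr Y A) by (apply ge2; auto).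
  assert (dZA : 2 <= gdist nbr Z A) by (apply ge2; auto).
  assert (dXp : forall p, In p P -> 2 <= gdist nbr X p).
  { intros p Hq; destruct (Hp p Hq) as [Ap [p1 [p2 [p3 p4]]]]. apply ge2; auto.
    intro H. unfold adj in H. apply HX in H. simpl in H. intuition. }
  assert (dAp : forall p, In p P -> 1 <= gdist nbr A p).
  { intros p Hq; destruct (Hp p Hq) as [Ap [p1 [p2 [p3 p4]]]]. apply ge1; auto. }
  assert (dYp : forall p, In p P -> 3 <= gdist nbr Y p).
  { intros p Hq; destruct (Hp p Hq) as [Ap [p1 [p2 [p3 p4]]]]. apply ge3; auto.
    - intro H. unfold adj in H. apply HY in H. simpl in H. destruct H as [<-|[<-|[<-|[<-|[]]]]]; try congruence.
      + apply (far B 1%nat); simpl; auto. apply walk1; auto.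
      + apply (far C 1%nat); simpl; auto. apply walk1; auto.
    - intros q H1 H2. unfold adj in H1. apply HY in H1. simpl in H1. destruct H1 as [<-|[<-|[<-|[<-|[]]]]].
      + unfold adj in H2. apply HX in H2. simpl in H2. intuition.
      + unfold adj in H2. apply HZ in H2. simpl in H2. destruct H2 as [<-|[<-|[<-|[<-|[]]]]]; try congruence.
        * apply (far W1 1%nat); simpl; auto. apply walk1; auto.
        * apply (far W2 1%nat); simpl; auto. apply walk1; auto.
      + apply (far B 2%nat); simpl; auto. apply walk2 with (w := p); auto.
      + apply (far C 2%nat); simpl; auto. apply walk2 with (w := p); auto. }
  assert (dZp : forall p, In p P -> 3 <= gdist nbr Z p).
  { intros p Hq; destruct (Hp p Hq) as [Ap [p1 [p2 [p3 p4]]]]. apply ge3; auto.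
    - intro H. unfold adj in H. apply HZ in H. simpl in H. destruct H as [<-|[<-|[<-|[<-|[]]]]]; try congruence.
      + apply (far W1 1%nat); simpl; auto. apply walk1; auto.
      + apply (far W2 1%nat); simpl; auto. apply walk1; auto.
    - intros q H1 H2. unfold adj in H1. apply HZ in H1. simpl in H1. destruct H1 as [<-|[<-|[<-|[<-|[]]]]].
      + unfold adj in H2. apply HX in H2. simpl in H2. intuition.
      + unfold adj in H2. apply HY in H2. simpl in H2. destruct H2 as [<-|[<-|[<-|[<-|[]]]]]; try congruence.
        * apply (far B 1%nat); simpl; auto. apply walk1; auto.
        * apply (far C 1%nat); simpl; auto. apply walk1; auto.
      + apply (far W1 2%nat); simpl; auto. apply walk2 with (w := p); auto.
      + apply (far W2 2%nat); simpl; auto. apply walk2 with (w := p); auto. }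
  assert (degA : deg nbr A = length (X :: P)).
  { unfold deg. apply Permutation_length, NoDup_Permutation; auto. apply (proj1 Hs). }
  assert (degX : deg nbr X = 3%nat).
  { unfold deg. change 3%nat with (length [Y;Z;A]). apply Permutation_length, NoDup_Permutation; auto. apply (proj1 Hs). }
  assert (DA : 2 <= INR (deg nbr A)).
  { rewrite degA. destruct P as [|p P']; [congruence|]. simpl length. replace 2 with (INR 2) by (simpl; lra).
    apply le_INR. lia. }
  set (f := fun v => if decP (v = X) then 2 else if decP (v = Y) then 3 else if decP (v = Z) then 3
                     else if decP (v = A) then 1 else 0).
  apply (neg_from_bound nbr X A (1/3)); auto; [lra|].
  intros al Hal. split.
  - exists (fun u v => mu nbr al X u * mu nbr al A v). split; [|split].
    + intros; apply Rmult_le_pos; apply mu_nonneg; lra.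
    + intros u _. rewrite lsum_scal, mu_total; auto. ring. rewrite degA; simpl; lia.
    + intros v _. rewrite lsum_scal_r, mu_total; auto. ring. rewrite degX; lia.
  - intros A' HA'. eapply Rle_trans; [|apply (dual_bound nbr al X A A' f HA')].
    2:{ intros u v Hu Hv.
        simpl in Hu. destruct Hu as [<-|Hu]; [|apply HX in Hu; simpl in Hu; destruct Hu as [<-|[<-|[<-|[]]]]];
        (simpl in Hv; destruct Hv as [<-|Hv]; [| apply HA in Hv; simpl in Hv; destruct Hv as [<-|Hv]]);
        try (pose proof (dXp v Hv); pose proof (dYp v Hv); pose proof (dZp v Hv); pose proof (dAp v Hv);
             destruct (Hp v Hv) as [_ [p1 [p2 [p3 p4]]]]);
        unfold f; dec;
        match goal with |- _ <= gdist nbr ?s ?t => pose proof (gdist_nonneg nbr s t) end; lra. }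
    assert (NX : NoDup [X;Y;Z;A]).
    { constructor; auto. simpl. intuition. }
    rewrite (lsum_same (ball1 nbr X) [X;Y;Z;A]); auto.
    2: apply ball_nodup; auto.
    2: { intros u; simpl. rewrite HX. simpl. tauto. }
    assert (NA : NoDup (A :: X :: P)) by (constructor; auto).
    rewrite (lsum_same (ball1 nbr A) (A :: X :: P)); auto.
    2: apply ball_nodup; auto.
    2: { intros u; unfold ball1. change (In u (A :: nbr A) <-> In u (A :: X :: P)). simpl. rewrite HA. simpl. tauto. }
    rewrite !lsum_cons.
    rewrite (lsum_ext_in P _ (fun _ => 0)).
    2:{ intros v Hv. destruct (Hp v Hv) as [_ [p1 [p2 [p3 p4]]]]. unfold f. dec; ring. }
    rewrite lsum_zero.
    rewrite !(mu_expand nbr al X [Y;Z;A] 3) by first [assumption | apply (proj1 Hs) | (simpl; lra)].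
    assert (muAA : mu nbr al A A = al).
    { unfold mu. dec. exfalso. apply HnA. apply HA. auto. lra. }
    assert (muAX : mu nbr al A X = (1 - al) / INR (deg nbr A)).
    { unfold mu. dec; [ring|]. exfalso. apply Hd0. apply HA. simpl; auto. }
    rewrite muAA, muAX. unfold lsum, f; simpl. dec.
    assert (Hb : (1 - al) / INR (deg nbr A) <= (1 - al) / 2).
    { unfold Rdiv. apply Rmult_le_compat_l; [lra|]. apply Rinv_le_contravar; lra. }
    lra.
Qed.

Lemma peel {V} (l : list V) p : NoDup l -> In p l -> exists l',
  (forall u, In u l <-> p = u \/ In u l') /\ NoDup l' /\ ~ In p l' /\ length l = S (length l').
Proof.
  intros HN Hp. destruct (in_split p l Hp) as [l1 [l2 ->]].
  exists (l1 ++ l2). split; [|split; [|split]].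
  - intros u. rewrite !in_app_iff. simpl. tauto.
  - eapply NoDup_remove_1; eauto.
  - eapply NoDup_remove_2; eauto.
  - rewrite !length_app. simpl. lia.
Qed.

Lemma peel2 {V} (l : list V) p q : NoDup l -> In p l -> In q l -> p <> q -> exists l',
  (forall u, In u l <-> In u (p :: q :: l')) /\ NoDup (p :: q :: l') /\ length l = S (S (length l')).
Proof.
  intros HN Hp Hq Hpq. destruct (peel l p HN Hp) as [l1 [H1 [N1 [P1 L1]]]].
  assert (Hq1 : In q l1) by (apply H1 in Hq; destruct Hq; [congruence|auto]).
  destruct (peel l1 q N1 Hq1) as [l2 [H2 [N2 [P2 L2]]]].
  exists l2. split; [|split].
  - intros u. rewrite H1, H2. simpl. tauto.
  - constructor. { simpl. intros [E|E]; [congruence|]. apply P1, H2. auto. }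
    constructor; auto.
  - lia.
Qed.

Lemma iff_perm {V} (l : list V) L L' : (forall u, In u L <-> In u L') ->
  (forall u, In u l <-> In u L) -> (forall u, In u l <-> In u L').
Proof. intros H1 H2 u. rewrite H2. apply H1. Qed.

Theorem lemma7 (V : Type) (nbr : V -> list V) :
  simple_graph nbr -> connected nbr ->
  (forall v, (deg nbr v <= 4)%nat) ->
  ricci_flat nbr ->
  forall x y, adj nbr x y -> deg nbr x = 3%nat -> deg nbr y = 4%nat ->
  ~ edge_in_cycle3 nbr x y.
Proof.
  intros Hs Hc Hdeg Hflat x y Hxy dx dy [z [zx [zy [Hxz Hyz]]]].
  assert (HN : forall v, NoDup (nbr v)) by apply (proj1 Hs).
  assert (Hsym : forall u v, adj nbr u v -> adj nbr v u) by (intros; apply adj_sym'; auto).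
  assert (Hirr : forall v, ~ adj nbr v v) by apply (proj1 (proj2 Hs)).
  assert (xy : x <> y) by (intros ->; apply (Hirr y); auto).
  destruct (peel2 (nbr x) y z (HN x) Hxy Hxz (not_eq_sym zy)) as [lx [HX [NX LX]]].
  unfold deg in dx. rewrite dx in LX.
  destruct lx as [|a [|a' lx]]; simpl in LX; try lia.
  assert (Hyx : adj nbr y x) by auto.
  destruct (peel2 (nbr y) x z (HN y) Hyx Hyz (not_eq_sym zx)) as [ly [HY [NY LY]]].
  unfold deg in dy. rewrite dy in LY.
  destruct ly as [|b [|c [|c' ly]]]; simpl in LY; try lia.
  assert (ax : a <> x) by (intros ->; apply (Hirr x); apply HX; simpl; auto).
  destruct (nd3 _ _ _ NX) as [yz [ya za]].
  assert (Hxa : adj nbr x a) by (unfold adj; apply HX; simpl; auto).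
  destruct (peel (nbr a) x (HN a) (Hsym _ _ Hxa)) as [P [HA [NP [PX LA]]]].
  assert (HA' : forall u, In u (nbr a) <-> In u (x :: P)) by (intros u; rewrite HA; simpl; tauto).
  assert (NXP : NoDup (x :: P)) by (constructor; auto).
  destruct P as [|p P'].
  { apply (U1 nbr x y z a Hs HX NX HA'). apply Hflat; auto. }
  assert (Hzx : adj nbr z x) by auto.
  assert (Hzy : adj nbr z y) by auto.
  destruct (peel2 (nbr z) x y (HN z) Hzx Hzy xy) as [lz [HZ [NZ LZ]]].
  assert (LZ4 := Hdeg z). unfold deg in LZ4. rewrite LZ in LZ4.
  assert (HX' : forall u, In u (nbr x) <-> In u [z;y;a]) by (intros u; rewrite HX; simpl; tauto).
  assert (NX' : NoDup [z;y;a]).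
  { constructor; [simpl; intuition|]. constructor; [simpl; intuition|]. constructor; auto. constructor. }
  destruct lz as [|w1 [|w2 [|w3 lz]]]; simpl in LZ4; try lia.
  { apply (U2 nbr x z y a Hs HX' NX' HZ NZ). apply Hflat; auto. }
  { apply (U3 nbr x z y a w1 Hs HX' NX' HZ NZ). apply Hflat; auto. }
  destruct (nd4 _ _ _ _ NY) as [_ [xb [xc [zb [zc bc]]]]].
  destruct (nd4 _ _ _ _ NZ) as [_ [xw1 [xw2 [yw1 [yw2 w12]]]]].
  destruct (classic (exists u n, In u [b;c;w1;w2] /\ (n <= 2)%nat /\ walk nbr n a u)) as [Hex|Hnex].
  - destruct Hex as [u [n [Hu [Hn Hw]]]]. simpl in Hu. destruct Hu as [<-|[<-|[<-|[<-|[]]]]].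
    + apply (U4 nbr x y z a b c Hs HX NX HY NY); [|apply Hflat; auto]. eauto.
    + apply (U4 nbr x y z a c b Hs HX NX); [| |eauto|apply Hflat; auto].
      * intros v; rewrite HY; simpl; tauto.
      * constructor; [simpl; intuition|]. constructor; [simpl; intuition|]. constructor; [simpl; intuition|]. constructor; auto. constructor.
    + apply (U4 nbr x z y a w1 w2 Hs HX' NX' HZ NZ); [|apply Hflat; auto]. eauto.
    + apply (U4 nbr x z y a w2 w1 Hs HX' NX'); [| |eauto|apply Hflat; auto].
      * intros v; rewrite HZ; simpl; tauto.
      * constructor; [simpl; intuition|]. constructor; [simpl; intuition|]. constructor; [simpl; intuition|]. constructor; auto. constructor.
  - assert (Hfar : forall u n, In u [b;c;w1;w2] -> (n <= 2)%nat -> ~ walk nbr n a u) by (intros u n Hu Hn Hw; apply Hnex; exists u, n; auto).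
    assert (HAY : ~ adj nbr a y).
    { intros H. apply Hsym in H. unfold adj in H. apply HY in H. simpl in H.
      destruct H as [H|[H|[H|[H|[]]]]]; try congruence.
      - apply Hnex. exists b, 0%nat. subst. simpl. repeat split; auto. constructor.
      - apply Hnex. exists c, 0%nat. subst. simpl. repeat split; auto. constructor. }
    assert (HAZ : ~ adj nbr a z).
    { intros H. apply Hsym in H. unfold adj in H. apply HZ in H. simpl in H.
      destruct H as [H|[H|[H|[H|[]]]]]; try congruence.
      - apply Hnex. exists w1, 0%nat. subst. simpl. repeat split; auto. constructor.
      - apply Hnex. exists w2, 0%nat. subst. simpl. repeat split; auto. constructor. }
    apply (Lneg nbr x y z a b c w1 w2 (p :: P') Hs Hc HX NX HY HZ HA' NXP ltac:(congruence) Hfar HAY HAZ).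
    apply Hflat; auto.
Qed.
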